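(* Let $\mathcal H$ be a real Hilbert space, $t_0>0$, let $f:\mathcal H\to\mathbb R$ be a convex function of class $\mathcal C^2(\mathcal H)$ with $S:=\operatorname{argmin}_{\mathcal H} f\neq\emptyset$, and let $e:[t_0,+\infty[\to\mathcal H$ be continuously differentiable. Suppose $\alpha\ge 0$ and $\beta>0$, and let $(x_0,\dot x_0)\in\mathcal H\times\mathcal H$. The following statements are equivalent: 1. $x:[t_0,+\infty[\to\mathcal H$ is a solution trajectory of $$\ddot x(t)+\frac{\alpha}{t}\dot x(t)+\beta\frac{d}{dt}\big(\nabla f(x(t))+e(t)\big)+\nabla f(x(t))+e(t)=0$$ with initial conditions $x(t_0)=x_0$, $\dot x(t_0)=\dot x_0$. 2. $(x,y):[t_0,+\infty[\to\mathcal H\times\mathcal H$ is a solution trajectory of the first-order system $$\begin{cases}\dot x(t)+\beta(\nabla f(x(t))+e(t))-\left(\frac1\beta-\frac\alpha t\right)x(t)+\frac1\beta y(t)=0,\\[2pt] \dot y(t)-\left(\frac1\beta-\frac\alpha t+\frac{\alpha\beta}{t^2}\right)x(t)+\frac1\beta y(t)=0,\end{cases}$$ with initial conditions $x(t_0)=x_0$ and $y(t_0)=-\beta(\dot x_0+\beta\nabla f(x_0))+(1-\beta\alpha/t_0)x_0-\beta^2e(t_0)$.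
   Context: Standing assumption of the paper: $f$ is convex on $\mathcal H$ and its set of minimizers $S$ is nonempty. *)

(* Defs.v *)
From HB Require Import structures.
From mathcomp Require Import all_boot all_order all_algebra.
From mathcomp Require Import all_classical all_reals all_analysis.
Set Implicit Arguments. Unset Strict Implicit. Unset Printing Implicit Defensive.
Import Order.TTheory GRing.Theory Num.Theory.
Import numFieldNormedType.Exports.
Local Open Scope ring_scope.

Section Defs.
Context {R : realType}.

(* A real Hilbert space: a complete normed space whose norm comes from the
   (symmetric, bilinear) inner product [inner]. *)
Definition is_inner_product (H : normedModType R) (inner : H -> H -> R) : Prop :=
  [/\ forall x y, inner x y = inner y x,
      forall a x y z, inner (a *: x + y) z = a * inner x z + inner y z &
      forall x, `|x| ^+ 2 = inner x x].

Definition is_gradient (H : normedModType R) (inner : H -> H -> R)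
  (f : H -> R) (g : H -> H) : Prop :=
  forall x, differentiable f x /\ forall h, 'd f x h = inner (g x) h.

Definition C1 (U V : normedModType R) (g : U -> V) : Prop :=
  (forall x, differentiable g x) /\
  forall x (eps : R), 0 < eps -> exists2 d : R, 0 < d &
    forall y, `|y - x| < d -> forall h, `|'d g y h - 'd g x h| <= eps * `|h|.

Definition C2 (H : normedModType R) (inner : H -> H -> R) (f : H -> R) : Prop :=
  exists g : H -> H, is_gradient inner f g /\ C1 g.

Definition convex_fun (H : normedModType R) (f : H -> R) : Prop :=
  forall x y (l : R), 0 <= l <= 1 ->
    f (l *: x + (1 - l) *: y) <= l * f x + (1 - l) * f y.

Definition hasderiv_on (V : normedModType R) (t0 : R) (u u' : R -> V) : Prop :=
  forall t, t0 <= t -> forall eps : R, 0 < eps -> exists2 d : R, 0 < d &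
    forall h : R, h != 0 -> `|h| < d -> t0 <= t + h ->
      `|h^-1 *: (u (t + h) - u t) - u' t| < eps.

Definition cont_on (V : normedModType R) (t0 : R) (u : R -> V) : Prop :=
  forall t, t0 <= t -> forall eps : R, 0 < eps -> exists2 d : R, 0 < d &
    forall s, t0 <= s -> `|s - t| < d -> `|u s - u t| < eps.

Definition C1_on (V : normedModType R) (t0 : R) (u : R -> V) : Prop :=
  exists u' : R -> V, hasderiv_on t0 u u' /\ cont_on t0 u'.

Definition sol_second_order (H : normedModType R) (gradf : H -> H)
  (e : R -> H) (alpha beta t0 : R) (x0 dx0 : H) (x : R -> H) : Prop :=
  exists (x' x'' w : R -> H),
    [/\ hasderiv_on t0 x x', hasderiv_on t0 x' x'',
        hasderiv_on t0 (fun t => gradf (x t) + e t) w,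
        (forall t, t0 <= t ->
           x'' t + (alpha / t) *: x' t + beta *: w t + (gradf (x t) + e t) = 0) &
        x t0 = x0 /\ x' t0 = dx0].

Definition sol_first_order (H : normedModType R) (gradf : H -> H)
  (e : R -> H) (alpha beta t0 : R) (x0 dx0 : H) (x y : R -> H) : Prop :=
  exists (x' y' : R -> H),
    [/\ hasderiv_on t0 x x', hasderiv_on t0 y y',
        (forall t, t0 <= t ->
           x' t + beta *: (gradf (x t) + e t) - (beta^-1 - alpha / t) *: x t
             + beta^-1 *: y t = 0),
        (forall t, t0 <= t ->
           y' t - (beta^-1 - alpha / t + alpha * beta / t ^+ 2) *: x t
             + beta^-1 *: y t = 0) &
        x t0 = x0 /\
        y t0 = - (beta *: (dx0 + beta *: gradf x0)) + (1 - beta * alpha / t0) *: x0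
               - beta ^+ 2 *: e t0].

End Defs.

(* Main.v *)
Require Import Defs.
From HB Require Import structures.
From mathcomp Require Import all_boot all_order all_algebra.
From mathcomp Require Import all_classical all_reals all_analysis.
From mathcomp Require Import ring lra.
Import Order.TTheory GRing.Theory Num.Theory.
Import numFieldNormedType.Exports.
Local Open Scope ring_scope.
Section Lmod.
Variable R : realType.
Variable V : lmodType R.
Inductive lexpr := LAtom of nat | LAdd of lexpr & lexpr | LOpp of lexpr
  | LScale of R & lexpr | LZero.
Fixpoint leval (env : seq V) e : V := match e with
  | LAtom n => nth 0 env n | LAdd a b => leval env a + leval env b
  | LOpp a => - leval env a | LScale k a => k *: leval env a | LZero => 0 end.
Fixpoint lcoef (n : nat) e : R := match e with
  | LAtom m => if (m == n)%N then 1 else 0 | LAdd a b => lcoef n a + lcoef n b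
  | LOpp a => - lcoef n a | LScale k a => k * lcoef n a | LZero => 0 end.
Fixpoint lin (env : seq V) (c : nat -> R) (k : nat) : V := match env with
  | [::] => 0 | v :: env' => c k *: v + lin env' c k.+1 end.
Fixpoint eqc (env : seq V) (c1 c2 : nat -> R) k : Prop := match env with
  | [::] => True | _ :: env' => c1 k = c2 k /\ eqc env' c1 c2 k.+1 end.
Lemma lin_add env c1 c2 k : lin env (fun n => c1 n + c2 n) k = lin env c1 k + lin env c2 k.
Proof.
elim: env k => [|v env IH] k /=; first by rewrite addr0.
by rewrite IH scalerDl addrACA.
Qed.
Lemma lin_opp env c k : lin env (fun n => - c n) k = - lin env c k.
Proof.
elim: env k => [|v env IH] k /=; first by rewrite oppr0.
by rewrite IH scaleNr opprD.
Qed.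
Lemma lin_scale env a c k : lin env (fun n => a * c n) k = a *: lin env c k.
Proof.
elim: env k => [|v env IH] k /=; first by rewrite scaler0.
by rewrite IH scalerDr scalerA.
Qed.
Lemma lin_zero env k : lin env (fun n => 0) k = 0.
Proof.
elim: env k => [|v env IH] k /=; first by [].
by rewrite IH scale0r addr0.
Qed.
Lemma lin_atom env m k : lin env (fun n => if (m == n)%N then 1 else 0) k =
   if (k <= m)%N then nth 0 env (m - k) else 0.
Proof.
elim: env k => [|v env IH] k /=; first by rewrite nth_nil; case: ifP.
rewrite IH; case: (eqVneq m k) => [->|mk].
  by rewrite scale1r leqnn subnn ltnn addr0.
rewrite scale0r add0r.
case: (ltngtP k m) => //= km; last by rewrite km eqxx in mk.
by rewrite subnS; case E: (m - k)%N => [|q] /=; [move: km; rewrite -subn_gt0 E|].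
Qed.
Lemma leval_lin env e : leval env e = lin env (fun n => lcoef n e) 0.
Proof.
elim: e => [m|a IHa b IHb|a IHa|k a IHa|] /=.
- by rewrite lin_atom subn0.
- by rewrite lin_add IHa IHb.
- by rewrite lin_opp IHa.
- by rewrite lin_scale IHa.
- by rewrite lin_zero.
Qed.
Lemma lin_ext env c1 c2 k : eqc env c1 c2 k -> lin env c1 k = lin env c2 k.
Proof.
elim: env k => [|v env IH] k //= [-> /IH ->] //.
Qed.
Lemma lmod_ok env e1 e2 :
  eqc env (fun n => lcoef n e1) (fun n => lcoef n e2) 0 -> leval env e1 = leval env e2.
Proof. by move=> H; rewrite !leval_lin; apply: lin_ext. Qed.
End Lmod.

Ltac lfind x l := lazymatch l with
  | x :: _ => constr:(0%N)
  | _ :: ?r => let n := lfind x r in constr:(S n) end.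
Ltac reify R env t := lazymatch t with
  | (?a + ?b)%R => let ra := reify R env a in let rb := reify R env b in constr:(@LAdd R ra rb)
  | (- ?a)%R => let ra := reify R env a in constr:(@LOpp R ra)
  | (?k *: ?a)%R => let ra := reify R env a in constr:(@LScale R k ra)
  | 0%R => constr:(@LZero R)
  | _ => let n := lfind t env in constr:(@LAtom R n)
  end.
Ltac lmod R env := lazymatch goal with |- ?l = ?r =>
  let el := reify R env l in let er := reify R env r in
  change (@leval R _ env el = @leval R _ env er); apply: lmod_ok; simpl; repeat split end.

Section T.
Context {R : realType}.
Lemma test (V : lmodType R) (a b c d : V) (k : R) :
  (a + b) - (c + d) - k *: (a + c) = (a - c - k *: a) + (b - d - k *: c).
Proof. lmod R [:: a; b; c; d]; ring. Qed.
End T.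
Section An.
Context {R : realType}.
Lemma eqle (x y : R) : x = y -> x <= y. Proof. by move->. Qed.

Definition D {V : normedModType R} (t0 : R) (u u' : R -> V) :=
  forall t, t0 <= t -> forall eps : R, 0 < eps -> exists2 d : R, 0 < d &
    forall h : R, `|h| < d -> t0 <= t + h -> `|u (t + h) - u t - h *: u' t| <= eps * `|h|.

Lemma D_ext (V : normedModType R) t0 (u v u' v' : R -> V) :
  (forall t, t0 <= t -> u t = v t) -> (forall t, t0 <= t -> u' t = v' t) ->
  D t0 u u' -> D t0 v v'.
Proof.
move=> Euv Eu Hd t tt eps e0; have [d d0 Hh] := Hd t tt eps e0; exists d => // h hd th.
by rewrite -(Euv (t + h)) // -(Euv t) // -(Eu t) //; apply: Hh.
Qed.

Lemma D_add (V : normedModType R) t0 (u v u' v' : R -> V) :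
  D t0 u u' -> D t0 v v' -> D t0 (fun t => u t + v t) (fun t => u' t + v' t).
Proof.
move=> Du Dv t tt eps e0.
have e2 : 0 < eps / 2 by rewrite divr_gt0.
have [d1 d10 H1] := Du t tt _ e2; have [d2 d20 H2] := Dv t tt _ e2.
exists (Order.min d1 d2); first by rewrite lt_min d10 d20.
move=> h; rewrite lt_min => /andP[h1 h2] th.
have -> : u (t+h) + v (t+h) - (u t + v t) - h *: (u' t + v' t) =
   (u (t+h) - u t - h *: u' t) + (v (t+h) - v t - h *: v' t).
  by lmod R [:: u (t+h); v (t+h); u t; v t; u' t; v' t]; ring.
apply: (le_trans (ler_normD _ _)).
have := H1 h h1 th; have := H2 h h2 th; lra.
Qed.

Lemma D_scale (V : normedModType R) t0 (c : R) (u u' : R -> V) :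
  D t0 u u' -> D t0 (fun t => c *: u t) (fun t => c *: u' t).
Proof.
move=> Du t tt eps e0.
have c0 : 0 < `|c| + 1 by rewrite ltr_pwDr // normr_ge0.
have e2 : 0 < eps / (`|c| + 1) by rewrite divr_gt0.
have [d d0 H] := Du t tt _ e2; exists d => // h hd th.
have -> : c *: u (t+h) - c *: u t - h *: (c *: u' t) = c *: (u (t+h) - u t - h *: u' t).
  by lmod R [:: u (t+h); u t; u' t]; ring.
rewrite normrZ; have := H h hd th => Hh.
apply: (le_trans (ler_wpM2l (normr_ge0 c) Hh)).
rewrite mulrA ler_wpM2r // ?normr_ge0 // mulrA ler_pdivrMr //.
have := normr_ge0 c; nra.
Qed.

Lemma D_mul (V : normedModType R) t0 (p p' : R -> R) (u u' : R -> V) :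
  D t0 p p' -> D t0 u u' -> D t0 (fun t => p t *: u t) (fun t => p' t *: u t + p t *: u' t).
Proof.
move=> Dp Du t tt eps e0.
set v := u t; set v' := u' t; set a := p t; set a' := p' t.
have nv := normr_ge0 v; have nv' := normr_ge0 v'; have na := normr_ge0 a; have na' := normr_ge0 a'.
set K := `|v| + `|v'| + 1.
have K0 : 0 < K by rewrite /K; lra.
set A := (`|a'| + 1) * (`|v'| + 1).
have A0 : 0 < A by rewrite /A mulr_gt0 //; lra.
set Aa := `|a| + 1.
have Aa0 : 0 < Aa by rewrite /Aa; lra.
have e3 : 0 < eps / 3 by rewrite divr_gt0.
have [d1 d10 H1] := Du t tt 1 ltr01.
have [d2 d20 H2] := Dp t tt (eps / 3 / K) (divr_gt0 e3 K0).
have [d3 d30 H3] := Du t tt (eps / 3 / Aa) (divr_gt0 e3 Aa0).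
exists (Order.min (Order.min (Order.min 1 d1) (Order.min d2 d3)) (eps / 3 / A)).
  by rewrite !lt_min d10 d20 d30 ltr01 divr_gt0.
move=> h; rewrite !lt_min => /andP[/andP[/andP[h1 hd1] /andP[hd2 hd3]] hA] th.
have nh := normr_ge0 h.
have {}H1 := H1 h hd1 th; have {}H2 := H2 h hd2 th; have {}H3 := H3 h hd3 th.
have hu1 : `|u (t+h) - v| <= `|h| * (`|v'| + 1).
  have : `|u (t+h) - v| <= `|u (t+h) - v - h *: v'| + `|h *: v'|.
    by rewrite -[X in `|X| <= _](subrK (h *: v')) ler_normD.
  rewrite normrZ; lra.
have hK : `|u (t+h)| <= K.
  have : `|u (t+h)| <= `|v| + `|u (t+h) - v|.
    by rewrite -[X in `|X| <= _](subrK v) addrC ler_normD.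
  rewrite /K; nra.
have -> : p (t + h) *: u (t + h) - a *: v - h *: (a' *: v + a *: v') =
   (p (t + h) - a - h * a') *: u (t + h) + (h * a') *: (u (t + h) - v)
    + a *: (u (t + h) - v - h *: v').
  by lmod R [:: u (t + h); v; v']; ring.
have T1 : `|(p (t + h) - a - h * a') *: u (t + h)| <= eps / 3 * `|h|.
  rewrite normrZ.
  have -> : eps / 3 * `|h| = (eps / 3 / K * `|h|) * K by field; lra.
  by apply: ler_pM => //; apply: H2.
have T2 : `|(h * a') *: (u (t + h) - v)| <= eps / 3 * `|h|.
  rewrite normrZ normrM.
  have : `|h| * A <= eps / 3 by rewrite -ler_pdivlMr // ltW.
  rewrite /A => hA'.
  have hh: `|h| * `|a'| * `|u (t + h) - v| <= `|h| * (`|a'| + 1) * (`|h| * (`|v'| + 1)).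
    by apply: ler_pM => //; nra.
  apply: (le_trans hh); nra.
have T3 : `|a *: (u (t + h) - v - h *: v')| <= eps / 3 * `|h|.
  rewrite normrZ.
  have : `|a| * `|u (t + h) - v - h *: v'| <= `|a| * (eps / 3 / Aa * `|h|).
    by apply: ler_wpM2l.
  move/le_trans; apply.
  rewrite mulrA ler_wpM2r // mulrA ler_pdivrMr // /Aa; nra.
apply: (le_trans (ler_normD _ _)); apply: (le_trans (lerD (ler_normD _ _) (lexx _))).
lra.
Qed.

Lemma diff_eps (V W : normedModType R) (f : V -> W) p : differentiable f p ->
  forall eps : R, 0 < eps -> exists2 d : R, 0 < d & forall k, `|k| < d ->
   `|f (k + p) - f p - 'd f p k| <= eps * `|k|.
Proof.
move=> df eps e0.
have E := diff_locallyx df.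
have : forall e : R, 0 < e -> \forall h \near (0:V), `|((fun h => f (h + p)) - (fun h => f p + 'd f p h)) h| <= e * `|h|.
  apply: eqadd_some_oP; apply/funext => h; exact: E h.
move=> /(_ eps e0) /nbhs_norm0P [d d0 Hd]; exists d => // k kd.
have := Hd k; simpl. move=> HH. by move/(_ kd): HH; rewrite opprD addrA.
Qed.
Lemma diff_bound (V W : normedModType R) (f : V -> W) p : differentiable f p ->
  exists M : R, forall k, `|'d f p k| <= M * `|k|.
Proof.
move=> df.
have hc : {for 0, continuous ('d f p)} by move=> ?; apply: diff_continuous.
have := continuous_linear_bounded 0 hc.
move=> /linear_boundedP.
case=> M [_ HM]. exists (M + 1). apply: HM. by rewrite ltrDl.
Qed.
Lemma hdE (V : normedModType R) t0 (u u' : R -> V) : hasderiv_on t0 u u' <-> D t0 u u'.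
Proof.
split=> Hd t tt eps e0.
- have [d d0 Hh] := Hd t tt eps e0; exists d => // h hd th.
  have [->|h0] := eqVneq h 0.
    by rewrite addr0 subrr scale0r subr0 !normr0 mulr0.
  have := Hh h h0 hd th => /ltW.
  have -> : u (t + h) - u t - h *: u' t = h *: (h^-1 *: (u (t + h) - u t) - u' t).
    by rewrite scalerBr scalerA divff // scale1r.
  by rewrite normrZ mulrC ler_pM2r // normr_gt0.
- have e2 : 0 < eps / 2 by rewrite divr_gt0.
  have [d d0 Hh] := Hd t tt (eps / 2) e2; exists d => // h h0 hd th.
  have := Hh h hd th.
  have -> : u (t + h) - u t - h *: u' t = h *: (h^-1 *: (u (t + h) - u t) - u' t).
    by rewrite scalerBr scalerA divff // scale1r.
  rewrite normrZ mulrC ler_pM2r ?normr_gt0 // => /le_lt_trans; apply.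
  by rewrite ltr_pdivrMr // ltr_pMr // ltr1n.
Qed.

Lemma diff_boundP (V W : normedModType R) (f : V -> W) p : differentiable f p ->
  exists2 M : R, 0 < M & forall k, `|'d f p k| <= M * `|k|.
Proof.
move=> /diff_bound [M HM]; exists (`|M| + 1).
  by rewrite ltr_pwDr // normr_ge0.
move=> k; apply: (le_trans (HM k)); apply: ler_wpM2r; first exact: normr_ge0.
by apply: (le_trans (ler_norm M)); rewrite lerDl.
Qed.

Arguments diff_eps {V W f p}.
Arguments diff_bound {V W f p}.
Arguments diff_boundP {V W f p}.

Lemma D_comp (V W : normedModType R) t0 (g : V -> W) (u u' : R -> V) :
  (forall p, differentiable g p) -> D t0 u u' ->
  D t0 (fun t => g (u t)) (fun t => 'd g (u t) (u' t)).
Proof.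
move=> dg Du t tt eps e0.
set p := u t; set v' := u' t.
have [M M0 HM] := diff_boundP (dg p).
have nv' := normr_ge0 v'.
set N := `|v'| + 1.
have N0 : 0 < N by rewrite /N; lra.
have e2 : 0 < eps / 2 by rewrite divr_gt0.
have [de de0 Hde] := diff_eps (dg p) _ (divr_gt0 e2 N0).
have [d1 d10 H1] := Du t tt 1 ltr01.
have [d2 d20 H2] := Du t tt (eps / 2 / M) (divr_gt0 e2 M0).
exists (Order.min (Order.min d1 d2) (de / N)).
  by rewrite !lt_min d10 d20 divr_gt0.
move=> h; rewrite !lt_min => /andP[/andP[hd1 hd2] hN] th.
have nh := normr_ge0 h.
have {}H1 := H1 h hd1 th; have {}H2 := H2 h hd2 th.
set k := u (t + h) - p.
have hk : `|k| <= `|h| * N.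
  have : `|k| <= `|k - h *: v'| + `|h *: v'|.
    by rewrite -[X in `|X| <= _](subrK (h *: v')) ler_normD.
  rewrite normrZ /N; lra.
have hkd : `|k| < de.
  apply: (le_lt_trans hk); by rewrite -ltr_pdivlMr.
have Ek : u (t + h) = k + p by rewrite /k subrK.
have {}H2 : `|k - h *: v'| <= eps / 2 / M * `|h| by exact: H2.
clearbody k.
have -> : g (u (t + h)) - g p - h *: 'd g p v' =
    (g (k + p) - g p - 'd g p k) + 'd g p (k - h *: v').
  have L : 'd g p (k - h *: v') = 'd g p k - h *: 'd g p v' by rewrite linearB linearZ.
  rewrite L -Ek.
  by lmod R [:: g (u (t + h)); g p; 'd g p k; 'd g p v']; ring.
apply: (le_trans (ler_normD _ _)).
have T1 : `|g (k + p) - g p - 'd g p k| <= eps / 2 * `|h|.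
  apply: (le_trans (Hde k hkd)).
  have nk := normr_ge0 k.
  have : eps / 2 / N * `|k| <= eps / 2 / N * (`|h| * N).
    by apply: ler_wpM2l => //; apply/ltW/divr_gt0.
  move/le_trans; apply; apply: eqle; field; lra.
have T2 : `|'d g p (k - h *: v')| <= eps / 2 * `|h|.
  apply: (le_trans (HM _)).
  have : M * `|k - h *: v'| <= M * (eps / 2 / M * `|h|).
    by apply: ler_wpM2l; [exact: ltW | exact: H2].
  move/le_trans; apply; apply: eqle; field; lra.
lra.
Qed.

Lemma D_recip t0 (c a : R) : 0 < t0 ->
  D t0 (fun t : R => c - a / t) (fun t => a / (t * t)).
Proof.
move=> t00 t tt eps e0.
have t0' : 0 < t by apply: (lt_le_trans t00 tt).
have na := normr_ge0 a.
have A0 : 0 < `|a| + 1 by lra.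
have T0 : 0 < t0 * t0 * t0 by rewrite !mulr_gt0.
exists (eps * (t0 * t0 * t0) / (`|a| + 1)).
  by rewrite divr_gt0 // mulr_gt0.
move=> h hd th.
have th0 : 0 < t + h by apply: (lt_le_trans t00 th).
have -> : c - a / (t + h) - (c - a / t) - h *: (a / (t * t)) =
   - (a * h * h) / (t * t * (t + h)).
  rewrite /GRing.scale /=; field; apply/andP; split; lra.
have P : 0 < t * t * (t + h) by rewrite !mulr_gt0.
rewrite normrM normrN normfV (gtr0_norm P) !normrM ler_pdivrMr //.
have nh := normr_ge0 h.
have hb : `|h| * (`|a| + 1) <= eps * (t0 * t0 * t0).
  by rewrite -ler_pdivlMr // ltW.
have t3 : t0 * t0 * t0 <= t * t * (t + h).
  have : t0 * t0 <= t * t by nra.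
  nra.
have X : `|a| * `|h| <= eps * (t * t * (t + h)) by nra.
have := ler_wpM2r nh X; rewrite -!mulrA => Y.
apply: (le_trans _ (le_trans Y _)); apply: eqle; ring.
Qed.

Lemma grad_unique (V : normedModType R) (inner : V -> V -> R) f g1 g2 :
  is_inner_product inner -> is_gradient inner f g1 -> is_gradient inner f g2 -> g1 = g2.
Proof.
move=> [_ Hlin Hn] G1 G2; apply/funext => p.
have E : forall h, inner (g1 p) h = inner (g2 p) h.
  by move=> h; rewrite -(proj2 (G1 p)) (proj2 (G2 p)).
apply/eqP; rewrite -subr_eq0 -normr_eq0 -sqrf_eq0 Hn.
have -> : g1 p - g2 p = (-1) *: g2 p + g1 p by rewrite scaleN1r addrC.
by rewrite Hlin E mulN1r addNr.
Qed.

End An.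

Arguments hdE {R V t0 u u'}.
Arguments D_ext {R V t0 u v u' v'}.
Arguments D_add {R V t0 u v u' v'}.
Arguments D_scale {R V t0} c {u u'}.
Arguments D_mul {R V t0 p p' u u'}.
Arguments D_comp {R V W t0 g u u'}.
Arguments D_recip {R t0} c a.
Arguments grad_unique {R V inner f g1 g2}.



Theorem theorem1 (R : realType) (H : completeNormedModType R)
  (inner : H -> H -> R) (t0 : R) (f : H -> R) (gradf : H -> H) (e : R -> H)
  (alpha beta : R) (x0 dx0 : H) :
  is_inner_product inner ->
  0 < t0 ->
  convex_fun f ->
  C2 inner f ->
  is_gradient inner f gradf ->
  (exists z : H, forall u : H, f z <= f u) ->
  C1_on t0 e ->
  0 <= alpha -> 0 < beta ->
  forall x : R -> H,
    sol_second_order gradf e alpha beta t0 x0 dx0 x <->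
    exists y : R -> H, sol_first_order gradf e alpha beta t0 x0 dx0 x y.
Proof.
move=> Hin t00 _ [g [Gg C1g]] Gf _ [e' [De _]] al0 be0 x.
have gg : g = gradf := grad_unique Hin Gg Gf.
subst g.
have dgf : forall p, differentiable gradf p := proj1 C1g.
have tpos : forall t, t0 <= t -> 0 < t by move=> t tt; apply: (lt_le_trans t00 tt).
split.
- case=> x' [x'' [w [Dx Dx' Dw Eq [X0 X'0]]]].
  move/hdE: Dx => Dx; move/hdE: Dx' => Dx'; move/hdE: Dw => Dw.
  exists (fun t => (-beta) *: x' t + (-beta^+2) *: (gradf (x t) + e t) + (1 - (beta * alpha) / t) *: x t).
  exists x', (fun t => (-beta) *: x'' t + (-beta^+2) *: w t + ((beta * alpha / (t * t)) *: x t + (1 - beta * alpha / t) *: x' t)).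
  split.
  + exact/hdE.
  + apply/hdE.
    exact: (D_add (D_add (D_scale (-beta) Dx') (D_scale (-beta^+2) Dw)) (D_mul (D_recip 1 (beta * alpha) t00) Dx)).
  + move=> t tt /=; have := tpos t tt => tp.
    lmod R [:: x' t; gradf (x t); e t; x t]; field; lra.
  + move=> t tt /=; have := tpos t tt => tp.
    transitivity ((-beta) *: (x'' t + (alpha / t) *: x' t + beta *: w t + (gradf (x t) + e t))); last by rewrite Eq // scaler0.
    lmod R [:: x'' t; x' t; w t; x t; gradf (x t); e t]; field; lra.
  + split => //=; rewrite X0 X'0.
    lmod R [:: dx0; gradf x0; e t0; x0]; field; lra.
- case=> y [x' [y' [Dx Dy E1 E2 [X0 Y0]]]].
  move/hdE: Dx => Dx; move/hdE: Dy => Dy; move/hdE: De => De.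
  have DG := D_add (D_comp dgf Dx) De.
  exists x', (fun t => (-beta) *: ('d gradf (x t) (x' t) + e' t) + ((alpha / (t * t)) *: x t + (beta^-1 - alpha / t) *: x' t) + (-beta^-1) *: y' t), (fun t => 'd gradf (x t) (x' t) + e' t).
  split.
  + exact/hdE.
  + apply/hdE.
    apply: (D_ext _ _ (D_add (D_add (D_scale (-beta) DG) (D_mul (D_recip (beta^-1) alpha t00) Dx)) (D_scale (-beta^-1) Dy))) => t tt //=.
    have := tpos t tt => tp.
    apply/eqP; rewrite -subr_eq0 -oppr_eq0; apply/eqP; rewrite -(E1 t tt).
    lmod R [:: gradf (x t); e t; x t; y t; x' t]; field; lra.
  + exact/hdE.
  + move=> t tt; have := tpos t tt => tp.
    have e1 := E1 t tt; have e2 := E2 t tt.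
    transitivity (beta^-1 *: (x' t + beta *: (gradf (x t) + e t) - (beta^-1 - alpha / t) *: x t + beta^-1 *: y t) - beta^-1 *: (y' t - (beta^-1 - alpha / t + alpha * beta / t ^+ 2) *: x t + beta^-1 *: y t)); last by rewrite e1 e2 !scaler0 subrr.
    lmod R [:: 'd gradf (x t) (x' t); e' t; x t; x' t; y' t; gradf (x t); e t; y t]; field; lra.
  + split => //.
    have e1 := E1 t0 (lexx t0); rewrite X0 Y0 in e1.
    apply/eqP; rewrite -subr_eq0; apply/eqP; rewrite -e1.
    lmod R [:: x' t0; dx0; gradf x0; e t0; x0]; field; lra.
Qed.
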